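(* Let $G$ be a finite graph and $K$ a maximal clique of $G$. Then $\log_2(\mathsf{dn}(K)+2)\le|\widetilde{K}|\le 2^{\mathsf{dn}(K)}$.
   Context: Two vertices are equivalent if they lie in exactly the same maximal cliques of $G$; $\widetilde{K}$ is the set of equivalence classes intersecting $K$. For $X\subseteq V(G)$, with $N(X)$ the set of vertices outside $X$ having a neighbour in $X$, a set $Y\subseteq N(X)$ is $X$-diverse if $N(y_1)\cap X\neq N(y_2)\cap X$ for all distinct $y_1,y_2\in Y$; the diversity number $\mathsf{dn}(X)$ is the maximum size of an $X$-diverse subset of $N(X)$. *)

(* Defs.v *)
From mathcomp Require Import all_boot.
From Stdlib Require Import Reals.
Set Implicit Arguments. Unset Strict Implicit. Unset Printing Implicit Defensive.

(* Simple graph on a finite vertex type T: adjacency e : rel T,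
   assumed symmetric and irreflexive in the theorem. *)
Section GraphDefs.
Variables (T : finType) (e : rel T).

Definition clique (K : {set T}) : bool :=
  [forall x in K, forall y in K, (x != y) ==> e x y].

Definition maximal_clique (K : {set T}) : bool := maxset clique K.

Definition clique_equiv (x y : T) : bool :=
  [forall K : {set T}, maximal_clique K ==> ((x \in K) == (y \in K))].

Definition eqclass (x : T) : {set T} := [set y | clique_equiv x y].

Definition Ktilde (K : {set T}) : {set {set T}} := [set eqclass x | x in K].

Definition nbr (y : T) : {set T} := [set z | e y z].

Definition Nset (X : {set T}) : {set T} :=
  [set y | (y \notin X) && [exists x in X, e y x]].

Definition diverse (X Y : {set T}) : bool :=
  (Y \subset Nset X) &&
  [forall y1 in Y, forall y2 in Y, (y1 != y2) ==> (nbr y1 :&: X != nbr y2 :&: X)].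

Definition dn (X : {set T}) : nat := \max_(Y : {set T} | diverse X Y) #|Y|.

End GraphDefs.

(* Main.v *)
Require Import Defs.
From mathcomp Require Import all_boot.
From mathcomp Require Import zify.
Set Implicit Arguments. Unset Strict Implicit.

Lemma cl_edge (T : finType) (e : rel T) (M : {set T}) x y :
  clique e M -> x \in M -> y \in M -> x != y -> e x y.
Proof.
by move=> /forallP/(_ x)/implyP H hx hy hxy; move: (H hx) => /forallP/(_ y)/implyP/(_ hy)/implyP/(_ hxy).
Qed.

Lemma max_ext (T : finType) (e : rel T) (e_sym : symmetric e) (a b : T) :
  e a b -> exists M, [/\ maximal_clique e M, a \in M & b \in M].
Proof.
move=> hab.
have cl : clique e [set a; b].
  apply/forallP => x; apply/implyP => hx; apply/forallP => y; apply/implyP => hy.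
  apply/implyP => hxy.
  move: hx hy hxy; rewrite !inE => /orP[]/eqP-> /orP[]/eqP->; rewrite ?eqxx //.
  by rewrite e_sym.
have [M hM sub] := maxset_exists cl.
exists M; split => //; apply: (subsetP sub); rewrite !inE eqxx ?orbT //.
Qed.

Lemma equiv_in (T : finType) (e : rel T) x z M :
  clique_equiv e x z -> maximal_clique e M -> x \in M -> z \in M.
Proof.
by move=> /forallP/(_ M)/implyP H hM; move: (H hM) => /eqP ->.
Qed.

Lemma equiv_trans (T : finType) (e : rel T) x y z :
  clique_equiv e x y -> clique_equiv e y z -> clique_equiv e x z.
Proof.
move=> /forallP H1 /forallP H2; apply/forallP => M; apply/implyP => hM.
by move: (H1 M) (H2 M); rewrite hM /= => /eqP -> /eqP ->.
Qed.

Lemma equiv_sym (T : finType) (e : rel T) x y :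
  clique_equiv e x y -> clique_equiv e y x.
Proof.
move=> /forallP H1; apply/forallP => M; apply/implyP => hM.
by move: (H1 M); rewrite hM /= eq_sym.
Qed.

Lemma equiv_refl (T : finType) (e : rel T) x : clique_equiv e x x.
Proof. by apply/forallP => M; apply/implyP => _. Qed.

Lemma eqclass_eq (T : finType) (e : rel T) x x' :
  clique_equiv e x x' -> eqclass e x = eqclass e x'.
Proof.
move=> h; apply/setP => y; rewrite !inE; apply/idP/idP => h2.
  exact: equiv_trans (equiv_sym h) h2.
exact: equiv_trans h h2.
Qed.

Lemma nonmax (T : finType) (e : rel T) (e_sym : symmetric e) (K : {set T}) y :
  maximal_clique e K -> y \notin K -> (forall x, x \in K -> e y x) -> False.
Proof.
move=> /maxsetP [cK mK] yK hy.
have cl : clique e (y |: K).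
  apply/forallP => a; apply/implyP => ha; apply/forallP => b; apply/implyP => hb.
  apply/implyP => hab.
  move: ha hb hab; rewrite !in_setU1 => /orP[/eqP->|ha] /orP[/eqP->|hb] hab.
  - by rewrite eqxx in hab.
  - exact: hy.
  - by rewrite e_sym; apply: hy.
  - exact: cl_edge cK ha hb hab.
have := mK _ cl (subsetUr _ _).
by move=> eqK; move: yK; rewrite -eqK setU11.
Qed.

Lemma trace_union (T : finType) (e : rel T) (e_sym : symmetric e) (K : {set T}) x y z :
  e y z -> clique_equiv e x z -> y \notin K -> x \in K -> e y x.
Proof.
move=> eyz hxz yK xK.
have ezy : e z y by rewrite e_sym.
have [M [hM zM yM]] := max_ext e_sym ezy.
have xM : x \in M by apply: equiv_in (equiv_sym hxz) hM zM.
have cM : clique e M by case/maxsetP: hM.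
apply: cl_edge cM yM xM _.
by apply/eqP => eq; move: yK; rewrite eq xK.
Qed.

Lemma dn_exists (T : finType) (e : rel T) K :
  exists2 Y, diverse e K Y & #|Y| = dn e K.
Proof.
have d0 : diverse e K set0.
  rewrite /diverse sub0set /=; apply/forallP => a; by rewrite inE.
have ne : 0 < #|diverse e K| by apply/card_gt0P; exists set0.
have [Y hY eq] := @eq_bigmax_cond _ (diverse e K) (fun Y : {set T} => #|Y|) ne.
by exists Y => //; rewrite /dn -eq.
Qed.

Lemma dn_ge (T : finType) (e : rel T) K Y : diverse e K Y -> #|Y| <= dn e K.
Proof. move=> h; exact: (@leq_bigmax_cond _ (diverse e K) (fun Y => #|Y|) Y h). Qed.

Lemma ymax (T : finType) (e : rel T) (K Y : {set T}) z :
  diverse e K Y -> #|Y| = dn e K -> z \in Nset e K ->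
  exists2 y, y \in Y & nbr e y :&: K = nbr e z :&: K.
Proof.
move=> hY hd hz.
case: (boolP [exists y in Y, nbr e y :&: K == nbr e z :&: K]) =>
  [/exists_inP [y hy /eqP h]|hn]; first by exists y.
exfalso.
have zY : z \notin Y.
  apply/negP => zY; move/negP: hn; apply; apply/exists_inP; exists z => //.
have dz : diverse e K (z |: Y).
  move: hY => /andP[sub /forallP dv]; rewrite /diverse; apply/andP; split.
    by rewrite subUset sub1set hz sub.
  apply/forallP => a; apply/implyP => ha; apply/forallP => b; apply/implyP => hb.
  apply/implyP.
  move: ha hb; rewrite !in_setU1 => /orP[/eqP->|ha] /orP[/eqP->|hb] hab.
  - by rewrite eqxx in hab.
  - apply/eqP => h; move/negP: hn; apply; apply/exists_inP; exists b => //; by rewrite h.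
  - apply/eqP => h; move/negP: hn; apply; apply/exists_inP; exists a => //; by rewrite h.
  - by move: (dv a) => /implyP/(_ ha)/forallP/(_ b)/implyP/(_ hb)/implyP/(_ hab).
have := dn_ge dz; rewrite cardsU1 zY hd.
by rewrite add1n ltnn.
Qed.

Lemma upper (T : finType) (e : rel T) (e_sym : symmetric e) (K : {set T})
  (hK : maximal_clique e K) : #|Ktilde e K| <= expn 2 (dn e K).
Proof.
have [Y hY hd] := dn_exists e K.
pose f x := Y :&: [set y | e y x].
have cK : clique e K by case/maxsetP: hK.
have twins : forall x x' m, x \in K -> x' \in K -> f x = f x' -> m != x -> m != x' ->
    e x m -> e x' m.
  move=> x x' m xK x'K hf mx mx' exm.
  case mK: (m \in K); first by apply: cl_edge cK x'K mK _; rewrite eq_sym.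
  have mN : m \in Nset e K.
    rewrite inE mK /=; apply/exists_inP; exists x => //; by rewrite e_sym.
  have [y yY hy] := ymax hY hd mN.
  have : x \in nbr e y :&: K by rewrite hy !inE xK andbT e_sym.
  rewrite !inE xK andbT => eyx.
  have : y \in f x' by rewrite -hf !inE yY eyx.
  rewrite !inE => /andP[_ eyx'].
  have : x' \in nbr e m :&: K by rewrite -hy !inE eyx' x'K.
  by rewrite !inE x'K andbT e_sym.
have equiv : forall x x', x \in K -> x' \in K -> f x = f x' -> clique_equiv e x x'.
  suff one : forall x x', x \in K -> x' \in K -> f x = f x' ->
      forall M, maximal_clique e M -> x \in M -> x' \in M.
    move=> x x' xK x'K hf; apply/forallP => M; apply/implyP => hM.
    apply/eqP; apply/idP/idP; [exact: one | exact: one x' x x'K xK (esym hf) M hM].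
  move=> x x' xK x'K hf M hM xM; apply/negPn/negP => x'M.
  have cM : clique e M by case/maxsetP: hM.
  apply: (nonmax e_sym hM x'M) => m mM.
  case: (eqVneq m x) => [->|mx].
    apply: cl_edge cK x'K xK _; apply/eqP => eq; by move: x'M; rewrite eq xM.
  apply: (twins _ _ _ xK x'K hf mx)...
    by apply/eqP => eq; move: x'M; rewrite -eq mM.
  apply: (cl_edge cM xM mM); apply/eqP => eq; by rewrite eq eqxx in mx.
pose h S := if [pick x in K | f x == S] is Some x then eqclass e x else set0.
have sub : Ktilde e K \subset h @: (f @: K).
  apply/subsetP => C /imsetP [x xK ->]; apply/imsetP; exists (f x).
    by apply/imsetP; exists x.
  rewrite /h; case: pickP => [x0 /andP[x0K /eqP hf]|hn]; last first.
    by move: (hn x); rewrite xK eqxx.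
  by apply: eqclass_eq; exact: (equiv x x0 xK x0K (esym hf)).
apply: leq_trans (subset_leq_card sub) _.
apply: leq_trans (leq_imset_card _ _) _.
rewrite -hd -card_powerset; apply: subset_leq_card; apply/subsetP => S /imsetP [x _ ->].
by rewrite powersetE subsetIl.
Qed.

Lemma lower (T : finType) (e : rel T) (e_sym : symmetric e)
  (T_nonempty : 0 < #|T|) (K : {set T})
  (hK : maximal_clique e K) : dn e K + 2 <= expn 2 #|Ktilde e K|.
Proof.
have [Y hY hd] := dn_exists e K.
move: (hY) => /andP[subN /forallP dv].
have cK : clique e K by case/maxsetP: hK.
have notK : forall y, y \in Y -> y \notin K.
  by move=> y /(subsetP subN); rewrite inE => /andP[].
pose g y := [set C in Ktilde e K | C :&: nbr e y != set0].
have key : forall y x, y \notin K -> x \in K -> (eqclass e x \in g y) = e y x.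
  move=> y x yK xK; rewrite inE (imset_f _ xK) /=.
  apply/set0Pn/idP => [[z]|eyx].
    rewrite !inE => /andP[hxz eyz]; exact: (trace_union e_sym eyz hxz yK xK).
  by exists x; rewrite !inE equiv_refl eyx.
have inj : {in Y &, injective g}.
  move=> y1 y2 h1 h2 hg; apply/eqP; apply/negPn/negP => hne.
  move: (dv y1) => /implyP/(_ h1)/forallP/(_ y2)/implyP/(_ h2)/implyP/(_ hne)/eqP; apply.
  apply/setP => x; rewrite !inE; case xK: (x \in K); rewrite ?andbF ?andbT //.
  by rewrite -(key y1 x (notK _ h1) xK) -(key y2 x (notK _ h2) xK) hg.
have [x0 x0K] : exists x0, x0 \in K.
  case/card_gt0P: T_nonempty => t _.
  case: (set_0Vmem K) => [K0|[x0 x0K]]; last by exists x0.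
  exfalso; apply: (nonmax e_sym hK (y:=t)); first by rewrite K0 inE.
  by move=> x; rewrite K0 inE.
have kne : Ktilde e K != set0 by apply/set0Pn; exists (eqclass e x0); exact: imset_f.
pose P := powerset (Ktilde e K) :\ set0 :\ Ktilde e K.
have subP : g @: Y \subset P.
  apply/subsetP => S /imsetP [y yY ->].
  rewrite /P !in_setD1 powersetE; apply/and3P; split.
  - apply/eqP => eq; apply: (nonmax e_sym hK (notK _ yY)) => x xK.
    by rewrite -key ?(notK _ yY) // eq; exact: imset_f.
  - move: (subsetP subN _ yY); rewrite inE => /andP[yK /exists_inP [x xK eyx]].
    by apply/set0Pn; exists (eqclass e x); rewrite key.
  - by apply/subsetP => C; rewrite inE => /andP[].
have := subset_leq_card subP; rewrite card_in_imset // hd.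
have c1 := cardsD1 set0 (powerset (Ktilde e K)).
have c2 := cardsD1 (Ktilde e K) (powerset (Ktilde e K) :\ set0).
rewrite card_powerset powersetE sub0set in c1.
rewrite in_setD1 powersetE subxx kne in c2.
rewrite /P; move: c1 c2; set n := expn 2 _; lia.
Qed.

From Stdlib Require Import Reals Lra.

Lemma INR_expn n : INR (expn 2 n) = (2 ^ n)%R.
Proof.
elim: n => [|n IH] //=; rewrite expnS -multE mult_INR IH /=; ring.
Qed.

Theorem lemma7p1 (T : finType) (e : rel T)
  (e_sym : symmetric e) (e_irr : irreflexive e)
  (T_nonempty : 0 < #|T|)
  (K : {set T}) (hK : maximal_clique e K) :
  (ln (INR (dn e K + 2)) / ln 2 <= INR #|Ktilde e K|)%R /\
  #|Ktilde e K| <= expn 2 (dn e K).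
Proof.
split; last exact: upper.
have hl := lower e_sym T_nonempty hK.
move: hl; set k := #|Ktilde e K|; set d := dn e K => /leP hl.
have H1 : (INR (d + 2) <= 2 ^ k)%R by rewrite -INR_expn; apply: le_INR.
have H0 : (0 < INR (d + 2))%R by apply: lt_0_INR; rewrite addn2; apply/ltP.
have Hln : (ln (INR (d + 2)) <= INR k * ln 2)%R.
  rewrite -ln_pow; last lra.
  case: (Rle_lt_or_eq_dec _ _ H1) => [H|H]; [left; apply: ln_increasing | right; rewrite H] => //.
have l2 : (0 < ln 2)%R by have := ln_lt_2; lra.
rewrite /Rdiv; apply: (Rmult_le_reg_r (ln 2)) => //.
rewrite Rmult_assoc Rinv_l; lra.
Qed.
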